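(* Let $R\subseteq S$, $\sigma$ be as in the context, and $n=n_1+\cdots+n_\ell$. Let $\mathbf{a}=(a_1,\ldots,a_\ell)\in(S^* )^\ell$ and $\beta_{i,j}\in S$ ($1\le i\le\ell$, $1\le j\le n_i$) satisfy: (i) $a_i-a_j^\beta\in S^*$ for all $\beta\in S^*$ and $1\le i<j\le\ell$; (ii) for each $i$, $\beta_{i,1},\ldots,\beta_{i,n_i}$ are $R$-linearly independent. Let $c_{i,j}\in S$ for $1\le j\le n_i$, $1\le i\le\ell$. Then there exists a unique skew polynomial $F\in S[x;\sigma]$ with $\deg(F)\le n-1$ and $F_{a_i}(\beta_{i,j})=c_{i,j}$ for all $1\le j\le n_i$, $1\le i\le\ell$.
   Context: $R$ is a finite commutative chain ring with maximal ideal $\mathfrak{m}$, $q=|R/\mathfrak{m}|$; $S=R[x]/(h)$ with $h$ monic of degree $m$ irreducible modulo $\mathfrak{m}$, local with maximal ideal $\mathfrak{M}=\mathfrak{m}S$ and unit group $S^*=S\setminus\mathfrak{M}$. $\sigma$ is a ring automorphism of $S$ generating the Galois group of $R\subseteq S$, with fixed ring $R$, reducing modulo $\mathfrak{M}$ to $y\mapsto y^q$. $S[x;\sigma]$ is the skew polynomial ring with $xa=\sigma(a)x$; the zero polynomial has degree $-\infty$. For $a,\beta\in S$: $N_i(a)=\sigma^{i-1}(a)\cdots\sigma(a)a$, $\mathcal{D}_a^i(\beta)=\sigma^i(\beta)N_i(a)$, and for $F=\sum_iF_ix^i$, $F_a(\beta)=\sum_iF_i\mathcal{D}_a^i(\beta)$.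 For $\beta\in S^*$, $a^\beta=\sigma(\beta)a\beta^{-1}$. *)

(* Defs.v *)
From HB Require Import structures.
From mathcomp Require Import all_boot all_order all_algebra.
Set Implicit Arguments. Unset Strict Implicit. Unset Printing Implicit Defensive.
Import GRing.Theory.
Local Open Scope ring_scope.

Definition is_ideal (R : finComUnitRingType) (I : {set R}) : Prop :=
  0 \in I /\ (forall x y, x \in I -> y \in I -> x + y \in I) /\
  (forall r x, x \in I -> r * x \in I).

Definition chain_ring (R : finComUnitRingType) : Prop :=
  forall I J : {set R}, is_ideal I -> is_ideal J -> (I \subset J) || (J \subset I).

Definition max_ideal (R : finComUnitRingType) : {set R} :=
  [set r : R | r \isn't a GRing.unit].

Definition resq (R : finComUnitRingType) : nat := #|R| %/ #|max_ideal R|.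

Definition irreducible_mod_m (R : finComUnitRingType) (h : {poly R}) : Prop :=
  (1 < size h)%N /\
  ~ (exists f g : {poly R}, (size f < size h)%N /\ (size g < size h)%N /\
       forall k, (h - f * g)`_k \in max_ideal R).

Definition ext_ideal (R S : finComUnitRingType) (iota : {rmorphism R -> S}) (s : S) : Prop :=
  exists (k : nat) (r : 'I_k -> R) (t : 'I_k -> S),
    (forall i, r i \in max_ideal R) /\ s = \sum_(i < k) iota (r i) * t i.

(* S is (isomorphic, via iota and theta, to) R[x]/(h): theta is a root of h and
   1, theta, ..., theta^(m-1) is an R-basis of S, m = deg h. *)
Definition is_quotient_by (R S : finComUnitRingType) (iota : {rmorphism R -> S})
    (h : {poly R}) (theta : S) : Prop :=
  (map_poly iota h).[theta] = 0 /\
  bijective (fun r : {ffun 'I_(size h).-1 -> R} =>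
               \sum_(i < (size h).-1) iota (r i) * theta ^+ i).

(* Skew polynomial evaluation. A skew polynomial F = sum_i F_i x^i in
   S[x;sigma] is represented by its coefficient list (a {poly S}); degrees
   and equality are coefficientwise, so this is faithful. *)
Definition Nnorm (S : finComUnitRingType) (sigma : S -> S) (i : nat) (a : S) : S :=
  \prod_(k < i) iter k sigma a.

Definition Dop (S : finComUnitRingType) (sigma : S -> S) (a : S) (i : nat) (b : S) : S :=
  iter i sigma b * Nnorm sigma i a.

Definition skew_eval (S : finComUnitRingType) (sigma : S -> S) (F : {poly S}) (a b : S) : S :=
  \sum_(i < size F) F`_i * Dop sigma a i b.

Definition sconj (S : finComUnitRingType) (sigma : S -> S) (a b : S) : S :=
  sigma b * a * b^-1.

(* Main.v *)
Require Import Defs.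
From HB Require Import structures.
From mathcomp Require Import all_boot all_order all_algebra all_fingroup.
From mathcomp Require Import ring.
Set Implicit Arguments. Unset Strict Implicit. Unset Printing Implicit Defensive.
Import GRing.Theory.
Local Open Scope ring_scope.

Section Skew.
Variables (S : finComUnitRingType) (sigma : {rmorphism S -> S}).
Local Notation sg := (sigma : S -> S).

Lemma iterD k (x y : S) : iter k sigma (x + y) = iter k sigma x + iter k sigma y.
Proof. by elim: k => //= k ->; rewrite rmorphD. Qed.
Lemma iterM k (x y : S) : iter k sigma (x * y) = iter k sigma x * iter k sigma y.
Proof. by elim: k => //= k ->; rewrite rmorphM. Qed.
Lemma iterN k (x : S) : iter k sigma (- x) = - iter k sigma x.
Proof. by elim: k => //= k ->; rewrite rmorphN. Qed.
Lemma iter0 k : iter k sigma (0 : S) = 0.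
Proof. by elim: k => //= k ->; rewrite rmorph0. Qed.
Lemma iter1 k : iter k sigma (1 : S) = 1.
Proof. by elim: k => //= k ->; rewrite rmorph1. Qed.
Lemma iterB k (x y : S) : iter k sigma (x - y) = iter k sigma x - iter k sigma y.
Proof. by rewrite iterD iterN. Qed.

Lemma NnormS i (a : S) : Nnorm sg i.+1 a = sigma (Nnorm sg i a) * a.
Proof.
rewrite /Nnorm big_ord_recl /= mulrC rmorph_prod; congr (_ * _).
Qed.

Lemma DopS i (a b : S) : Dop sg a i.+1 b = sigma (Dop sg a i b) * a.
Proof. by rewrite /Dop NnormS rmorphM -iterS mulrA. Qed.

Lemma Dop0 a b : Dop sg a 0 b = b.
Proof. by rewrite /Dop /Nnorm big_ord0 mulr1. Qed.

Lemma skew_evalE (F : {poly S}) a b N : (size F <= N)%N ->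
  skew_eval sg F a b = \sum_(i < N) F`_i * Dop sg a i b.
Proof.
move=> hN; rewrite /skew_eval (big_ord_widen N (fun i => F`_i * Dop sg a i b) hN).
rewrite [RHS](bigID (fun i : 'I_N => (i < size F)%N)) /= [X in _ = _ + X]big1 ?addr0 //.
by move=> i; rewrite -leqNgt => hi; rewrite nth_default // mul0r.
Qed.

Lemma skew_evalD F G a b :
  skew_eval sg (F + G) a b = skew_eval sg F a b + skew_eval sg G a b.
Proof.
pose N := maxn (size F) (size G).
have hF : (size F <= N)%N by rewrite leq_maxl.
have hG : (size G <= N)%N by rewrite leq_maxr.
have hFG : (size (F + G)%R <= N)%N by rewrite (leq_trans (size_polyD _ _)).
rewrite (skew_evalE a b hF) (skew_evalE a b hG) (skew_evalE a b hFG) -big_split /=.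
by apply: eq_bigr => i _; rewrite coefD mulrDl.
Qed.

Lemma skew_evalZ (s : S) F a b :
  skew_eval sg (s *: F) a b = s * skew_eval sg F a b.
Proof.
have h : (size (s *: F) <= size F)%N by apply: size_scale_leq.
rewrite (skew_evalE a b h) /skew_eval mulr_sumr; apply: eq_bigr => i _.
by rewrite coefZ /Dop !mulrA.
Qed.

Lemma skew_eval0 a b : skew_eval sg 0 a b = 0.
Proof. by rewrite /skew_eval size_poly0 big_ord0. Qed.

Lemma skew_evalN F a b : skew_eval sg (- F) a b = - skew_eval sg F a b.
Proof. by rewrite -scaleN1r skew_evalZ mulN1r. Qed.

Lemma skew_evalB F G a b :
  skew_eval sg (F - G) a b = skew_eval sg F a b - skew_eval sg G a b.
Proof. by rewrite skew_evalD skew_evalN. Qed.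

Lemma Dop_lin (c : S) a i u v : sigma c = c ->
  Dop sg a i (c * u + v) = c * Dop sg a i u + Dop sg a i v.
Proof.
move=> hc; rewrite /Dop iterD iterM.
have -> : iter i sigma c = c by elim: i => //= i ->.
by rewrite mulrDl mulrA.
Qed.

Lemma skew_eval_lin (c : S) F a u v : sigma c = c ->
  skew_eval sg F a (c * u + v) = c * skew_eval sg F a u + skew_eval sg F a v.
Proof.
move=> hc; rewrite /skew_eval mulr_sumr -big_split; apply: eq_bigr => i _ /=.
by rewrite Dop_lin // mulrDr !mulrA [F`_i * c]mulrC.
Qed.

(* skew multiplication on the left by (x - b) *)
Definition skmul (b : S) (P : {poly S}) : {poly S} :=
  \poly_(i < (size P).+1) ((if i is i'.+1 then sigma P`_i' else 0) - b * P`_i).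

Lemma skew_eval_skmul b P a u :
  skew_eval sg (skmul b P) a u =
  sigma (skew_eval sg P a u) * a - b * skew_eval sg P a u.
Proof.
rewrite (skew_evalE a u (size_poly _ _)).
rewrite (skew_evalE a u (leqnSn (size P))).
rewrite /skew_eval rmorph_sum mulr_suml mulr_sumr.
rewrite (eq_bigr (fun i : 'I_(size P).+1 =>
   (if (i : nat) is i'.+1 then sigma P`_i' else 0) * Dop sg a i u
   - b * (P`_i * Dop sg a i u))); last first.
  by move=> i _; rewrite coef_poly (ltn_ord i) mulrBl (mulrA b).
rewrite sumrB; congr (_ - _).
rewrite big_ord_recl /= mul0r add0r big_ord_recr /= (nth_default _ (leqnn _)) mul0r rmorph0 mul0r addr0.
by apply: eq_bigr => i _; rewrite /bump /= add1n add0n DopS [in RHS]rmorphM (mulrA (sigma P`_i)).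
Qed.

Lemma skmul_monic b P k : P \is monic -> size P = k.+1 ->
  skmul b P \is monic /\ size (skmul b P) = k.+2.
Proof.
move=> Pm sP.
have hc : (skmul b P)`_k.+1 = 1.
  have hk : P`_k = 1 by rewrite -(monicP Pm) lead_coefE sP.
  by rewrite /skmul coef_poly sP ltnSn hk rmorph1 nth_default ?sP // mulr0 subr0.
have hs : size (skmul b P) = k.+2.
  apply/eqP; rewrite eqn_leq -{1}sP size_poly /= ltnNge.
  by apply/negP => /leq_sizeP/(_ _ (leqnn _)); rewrite hc; apply/eqP; exact: oner_neq0.
by split=> //; rewrite monicE lead_coefE hs hc.
Qed.

End Skew.

Section Interp.
Variables (R S : finComUnitRingType) (iota : {rmorphism R -> S}) (sigma : {rmorphism S -> S}).
Local Notation sg := (sigma : S -> S).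
Hypothesis Hloc : forall x y : S, x \isn't a GRing.unit -> y \isn't a GRing.unit ->
  x + y \isn't a GRing.unit.
Hypothesis Hsig_nu : forall x : S, x \isn't a GRing.unit -> sigma x \isn't a GRing.unit.
Hypothesis Hfix : forall r, sigma (iota r) = iota r.
Hypothesis HF : forall rho : S, sigma rho - rho \isn't a GRing.unit ->
  exists r, rho - iota r \isn't a GRing.unit.
Variable z : R.
Hypothesis Hz0 : z != 0.
Hypothesis Hz : forall x : S, x \isn't a GRing.unit -> iota z * x = 0.
Variable A : S -> Prop.
Hypothesis HAu : forall x, A x -> x \is a GRing.unit.
Hypothesis HAc : forall x y, A x -> A y -> x <> y -> forall d, d \is a GRing.unit ->
  sconj sg x d - y \is a GRing.unit.

Lemma nuN (x : S) : x \isn't a GRing.unit -> - x \isn't a GRing.unit.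
Proof. by rewrite unitrN. Qed.
Lemma nuB (x y : S) : x \isn't a GRing.unit -> y \isn't a GRing.unit ->
  x - y \isn't a GRing.unit.
Proof. by move=> hx hy; apply: Hloc => //; apply: nuN. Qed.
Lemma nuMr (x y : S) : x \isn't a GRing.unit -> x * y \isn't a GRing.unit.
Proof. by rewrite unitrM; apply: contra => /andP[]. Qed.
Lemma nuMl (x y : S) : y \isn't a GRing.unit -> x * y \isn't a GRing.unit.
Proof. by rewrite mulrC; apply: nuMr. Qed.

Definition spanbad (L : seq S) u := exists r : nat -> R,
  u - \sum_(t < size L) iota (r t) * L`_t \isn't a GRing.unit.
Definition indep (L : seq S) := forall r : nat -> R,
  \sum_(t < size L) iota (r t) * L`_t = 0 -> forall t, (t < size L)%N -> r t = 0.
Definition classL (pts : seq (S * S)) x := [seq p.2 | p <- pts & p.1 == x].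
Definition good pts := forall x, indep (classL pts x).
Definition Inv pts P := forall x, A x -> forall u,
  (skew_eval sg P x u \isn't a GRing.unit) <-> spanbad (classL pts x) u.
Definition vanish (pts : seq (S * S)) P := forall p, p \in pts -> skew_eval sg P p.1 p.2 = 0.
Definition interp (pts : seq (S * S)) F (cs : nat -> S) := forall k, (k < size pts)%N ->
  skew_eval sg F (nth (0,0) pts k).1 (nth (0,0) pts k).2 = cs k.

Lemma classL_rcons pts p x : classL (rcons pts p) x =
  if p.1 == x then rcons (classL pts x) p.2 else classL pts x.
Proof. by rewrite /classL filter_rcons; case: ifP => //; rewrite map_rcons. Qed.

Lemma sum_rcons (L : seq S) b (r : nat -> R) :
  \sum_(t < size (rcons L b)) iota (r t) * (rcons L b)`_t =
  \sum_(t < size L) iota (r t) * L`_t + iota (r (size L)) * b.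
Proof.
rewrite size_rcons big_ord_recr /= nth_rcons ltnn eqxx; congr (_ + _).
by apply: eq_bigr => t _; rewrite nth_rcons ltn_ord.
Qed.

Lemma indep_rcons L b : indep (rcons L b) -> indep L.
Proof.
move=> hi r hr t ht.
pose r' := fun t => if (t < size L)%N then r t else 0.
have := hi r'; rewrite sum_rcons /r' ltnn rmorph0 mul0r addr0.
rewrite (eq_bigr (fun t : 'I_(size L) => iota (r t) * L`_t)); last first.
  by move=> i _; rewrite ltn_ord.
move=> /(_ hr t); rewrite ht size_rcons; apply; exact: ltnW.
Qed.

Lemma indep_rcons_span L b : indep (rcons L b) -> ~ spanbad L b.
Proof.
move=> hi [r hr]; have := Hz hr; rewrite mulrBr mulr_sumr => h.
pose r' := fun t => if (t < size L)%N then - (z * r t) else z.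
have := hi r'; rewrite sum_rcons /r' ltnn.
rewrite (eq_bigr (fun t : 'I_(size L) => - (iota z * (iota (r t) * L`_t)))); last first.
  by move=> i _; rewrite ltn_ord rmorphN rmorphM mulNr mulrA.
rewrite sumrN addrC h => /(_ erefl (size L)); rewrite ltnn size_rcons ltnSn.
by move=> /(_ erefl) /eqP; rewrite (negbTE Hz0).
Qed.

Lemma spanbad_rcons L b u :
  spanbad (rcons L b) u <-> exists r0, spanbad L (u - iota r0 * b).
Proof.
split.
  move=> [r]; rewrite sum_rcons => h; exists (r (size L)); exists r.
  by rewrite opprD addrA addrAC in h.
move=> [r0 [r h]]; pose r' := fun t => if t == size L then r0 else r t.
exists r'; rewrite sum_rcons /r' eqxx.
rewrite (eq_bigr (fun t : 'I_(size L) => iota (r t) * L`_t)); last first.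
  by move=> i _; rewrite ifN // neq_ltn ltn_ord.
by rewrite opprD addrA addrAC.
Qed.


Lemma step_same x w g : A x -> g \is a GRing.unit ->
  (sigma w * x - sconj sg x g * w \isn't a GRing.unit) <->
  exists r0, w - iota r0 * g \isn't a GRing.unit.
Proof.
move=> Ax gu; set rho := w * g^-1.
have sgu : sigma g \is a GRing.unit by rewrite rmorph_unit.
have e1 : sigma g * (sigma g)^-1 = 1 by rewrite mulrV.
have e2 : g * g^-1 = 1 by rewrite mulrV.
have key : sigma w * x - sconj sg x g * w = sigma g * x * (sigma rho - rho).
  rewrite /rho /sconj rmorphM rmorphV //; ring: e1.
have ux : sigma g * x \is a GRing.unit by rewrite unitrM sgu HAu.
rewrite key; split.
  move=> h; have : sigma rho - rho \isn't a GRing.unit.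
    by move: h; apply: contra => hu; rewrite unitrM ux.
  move=> /HF [r0 hr0]; exists r0.
  have -> : w - iota r0 * g = (rho - iota r0) * g by rewrite /rho; ring: e2.
  exact: nuMr.
move=> [r0 hr0].
have h1 : rho - iota r0 \isn't a GRing.unit.
  have -> : rho - iota r0 = (w - iota r0 * g) * g^-1 by rewrite /rho; ring: e2.
  exact: nuMr.
have -> : sigma rho - rho = sigma (rho - iota r0) - (rho - iota r0).
  by rewrite rmorphB Hfix; ring.
by apply: nuMl; apply: nuB => //; apply: Hsig_nu.
Qed.

Lemma step_other a0 x w g : A a0 -> A x -> a0 <> x -> g \is a GRing.unit ->
  (sigma w * a0 - sconj sg x g * w \isn't a GRing.unit) <-> (w \isn't a GRing.unit).
Proof.
move=> Aa0 Ax ne gu; split; last first.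
  by move=> wn; apply: nuB; [apply: nuMr; apply: Hsig_nu | apply: nuMl].
apply: contra => wu.
have sgu : sigma g \is a GRing.unit by rewrite rmorph_unit.
have du : g^-1 * w \is a GRing.unit by rewrite unitrM unitrV gu.
have e1 : sigma g * (sigma g)^-1 = 1 by rewrite mulrV.
have e2 : g * g^-1 = 1 by rewrite mulrV.
have e3 : w * w^-1 = 1 by rewrite mulrV.
have key : sigma w * a0 - sconj sg x g * w =
    sigma g * (sconj sg a0 (g^-1 * w) - x) * g^-1 * w.
  rewrite /sconj rmorphM rmorphV // invrM ?unitrV // invrK; ring: e1 e2 e3.
rewrite key !unitrM sgu unitrV gu wu !andbT; exact: HAc.
Qed.

Lemma skew_eval1 a u : skew_eval sg 1 a u = u.
Proof. by rewrite /skew_eval size_poly1 big_ord1 coefC eqxx mul1r Dop0. Qed.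

Lemma main pts : (forall p, p \in pts -> A p.1) -> good pts ->
  exists P, [/\ P \is monic, size P = (size pts).+1, vanish pts P, Inv pts P &
     forall cs : nat -> S, exists! F : {poly S}, (size F <= size pts)%N /\ interp pts F cs].
Proof.
elim/last_ind: pts => [|pts p IH] hA hg.
  exists 1; split.
  - exact: monic1.
  - by rewrite size_poly1.
  - by [].
  - move=> x _ u; rewrite skew_eval1 /spanbad /classL /=; split.
      by move=> h; exists (fun _ => 0); rewrite big_ord0 subr0.
    by case=> r; rewrite big_ord0 subr0.
  move=> cs; exists 0; split; first by split; rewrite ?size_poly0.
  by move=> F [hF _]; apply/esym/eqP; rewrite -size_poly_eq0 -leqn0.
have hA' : forall q, q \in pts -> A q.1.
  by move=> q hq; apply: hA; rewrite mem_rcons in_cons hq orbT.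
have hg' : good pts.
  move=> x; have := hg x; rewrite classL_rcons; case: ifP => // _.
  exact: indep_rcons.
have [P [Pm Ps Pv Pinv Pint]] := IH hA' hg'.
set x := p.1; set beta := p.2.
have Ax : A x by apply: hA; rewrite mem_rcons mem_head.
set g := skew_eval sg P x beta.
have gu : g \is a GRing.unit.
  apply/negPn/negP => /(Pinv x Ax beta).
  apply: indep_rcons_span; have := hg x; rewrite classL_rcons eqxx //.
set b := sconj sg x g.
have [P'm P's] := skmul_monic sigma b Pm Ps.
exists (skmul sg b P); split; [done | by rewrite size_rcons | | |].
- move=> q; rewrite mem_rcons in_cons => /orP [/eqP -> | hq].
    rewrite skew_eval_skmul -/x -/beta -/g /b /sconj divrK //; exact: subrr.
  by rewrite skew_eval_skmul Pv // rmorph0 mul0r mulr0 subrr.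
- move=> a0 Aa0 u; rewrite skew_eval_skmul classL_rcons.
  case: (eqVneq x a0) => [<- | ne].
    rewrite (step_same _ Ax gu); rewrite spanbad_rcons.
    split; move=> [r0 h]; exists r0.
      apply/(Pinv x Ax); have := skew_eval_lin P x beta u
        (_ : sigma (- iota r0) = - iota r0).
      by rewrite rmorphN Hfix => /(_ erefl); rewrite addrC mulNr => ->; rewrite -/g addrC mulNr.
    move: h => /(Pinv x Ax); have := skew_eval_lin P x beta u
        (_ : sigma (- iota r0) = - iota r0).
    by rewrite rmorphN Hfix => /(_ erefl); rewrite addrC mulNr => ->; rewrite -/g addrC mulNr.
  rewrite (step_other _ Aa0 Ax _ gu); last by move=> e; rewrite e eqxx in ne.
  exact: Pinv.
move=> cs; set n := size pts.
have [F0 [[hF0s hF0i] _]] := Pint cs.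
have Pp : forall k, (k < n)%N -> skew_eval sg P (nth (0,0) pts k).1 (nth (0,0) pts k).2 = 0.
  by move=> k hk; apply: Pv; apply: mem_nth.
set s := (cs n - skew_eval sg F0 x beta) * g^-1.
exists (F0 + s *: P); split.
  split.
    rewrite size_rcons; apply: leq_trans (size_polyD _ _) _.
    by rewrite geq_max (leq_trans hF0s) // (leq_trans (size_scale_leq _ _)) // Ps.
  move=> k; rewrite size_rcons ltnS leq_eqVlt => /orP [/eqP -> | hk].
    rewrite nth_rcons ltnn eqxx skew_evalD skew_evalZ -/x -/beta -/g /s divrK //.
    by rewrite addrC subrK.
  rewrite nth_rcons hk skew_evalD skew_evalZ hF0i // Pp // mulr0 addr0 //.
move=> G [hGs hGi]; rewrite size_rcons in hGs.
suff : (F0 + s *: P) - G = 0 by move/eqP; rewrite subr_eq0 => /eqP.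
set D := (F0 + s *: P) - G.
have hDs : (size D <= n.+1)%N.
  apply: leq_trans (size_polyD _ _) _; rewrite geq_max size_polyN hGs andbT.
  apply: leq_trans (size_polyD _ _) _.
  by rewrite geq_max ltnW ?ltnS // (leq_trans (size_scale_leq _ _)) // Ps.
have hDi : forall k, (k < n.+1)%N ->
    skew_eval sg D (nth (0,0) (rcons pts p) k).1 (nth (0,0) (rcons pts p) k).2 = 0.
  move=> k hk; rewrite skew_evalB hGi ?size_rcons //.
  rewrite skew_evalD skew_evalZ.
  move: hk; rewrite ltnS leq_eqVlt => /orP [/eqP -> | hk].
    by rewrite nth_rcons ltnn eqxx -/x -/beta -/g /s divrK //; ring.
  by rewrite nth_rcons hk hF0i // Pp // mulr0 addr0 subrr.
set d := D`_n.
have hD0 : D - d *: P = 0.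
  have [F0z [_ F0zu]] := Pint (fun _ => 0).
  rewrite -(F0zu 0); last first.
    by split=> [|k hk]; rewrite ?size_poly0 // skew_eval0.
  apply/esym; apply: F0zu; split.
    apply/leq_sizeP => j; rewrite leq_eqVlt => /orP [/eqP <- | hj].
      have hPn : P`_n = 1 by rewrite -(monicP Pm) lead_coefE Ps.
      by rewrite coefB coefZ /d -/n hPn mulr1 subrr.
    rewrite coefB coefZ !nth_default ?mulr0 ?subr0 //; first by rewrite Ps.
    exact: leq_trans hDs hj.
  move=> k hk; rewrite skew_evalB skew_evalZ Pp // mulr0 subr0.
  by have := hDi k (ltnW hk); rewrite nth_rcons hk.
have eD : D = d *: P by apply/eqP; rewrite -subr_eq0 hD0.
have := hDi n (ltnSn n); rewrite nth_rcons ltnn eqxx eD skew_evalZ -/x -/beta -/g.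
move=> hdg.
by rewrite -[d](mulrK gu) hdg mul0r scale0r.
Qed.

End Interp.

Section RingR.
Variable R : finComUnitRingType.
Hypothesis HR : chain_ring R.

Definition pid (x : R) : {set R} := [set x * r | r : R].

Lemma pid_ideal x : is_ideal (pid x).
Proof.
split; first by apply/imsetP; exists 0; rewrite ?mulr0.
split.
  move=> u v /imsetP [r1 _ ->] /imsetP [r2 _ ->]; apply/imsetP; exists (r1 + r2) => //.
  by rewrite mulrDr.
move=> r u /imsetP [r1 _ ->]; apply/imsetP; exists (r * r1) => //; ring.
Qed.

Lemma mem_pid x : x \in pid x.
Proof. by apply/imsetP; exists 1; rewrite ?mulr1. Qed.

Lemma Rloc (x y : R) : x \isn't a GRing.unit -> y \isn't a GRing.unit ->
  x + y \isn't a GRing.unit.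
Proof.
have H : forall u v : R, v \isn't a GRing.unit -> pid u \subset pid v ->
    u + v \isn't a GRing.unit.
  move=> u v hv /subsetP /(_ u (mem_pid u)) /imsetP [r _ ->].
  have -> : v * r + v = v * (r + 1) by ring.
  by rewrite unitrM negb_and hv.
move=> hx hy; case/orP: (HR (pid_ideal x) (pid_ideal y)) => hs.
  exact: H.
by rewrite addrC; apply: H.
Qed.

Lemma RnuN (x : R) : x \isn't a GRing.unit -> - x \isn't a GRing.unit.
Proof. by rewrite unitrN. Qed.

Lemma Rone_sub (x : R) : x \isn't a GRing.unit -> 1 - x \is a GRing.unit.
Proof.
move=> hx; apply/negPn/negP => h.
by have := Rloc h hx; rewrite subrK unitr1.
Qed.

Lemma Rsocle : exists2 z : R, z != 0 & forall x, x \isn't a GRing.unit -> z * x = 0.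
Proof.
have h10 : (1 : R) != 0 := oner_neq0 R.
case: (@arg_minnP R 1 (fun z : R => z != 0) (fun z : R => #|pid z|) h10) => z z0 zmin.
exists z => // x hx; apply/eqP/negP => /negP zx0.
have := zmin _ zx0 => hle.
have sub : pid (z * x) \subset pid z.
  apply/subsetP => u /imsetP [r _ ->]; apply/imsetP; exists (x * r) => //; ring.
have /eqP e : pid (z * x) == pid z by rewrite eqEcard sub hle.
have := mem_pid z; rewrite -e => /imsetP [r _ hz].
have : z * (1 - x * r) = 0 by rewrite mulrBr mulr1 mulrA -hz subrr.
move=> h; have u := Rone_sub (x := x * r) _.
move: z0; rewrite -[z](mulrK (u _)) ?h ?mul0r ?eqxx //.
by rewrite unitrM negb_and hx.
Qed.

Definition mideal := max_ideal R.

Lemma in_mideal x : (x \in mideal) = (x \isn't a GRing.unit).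
Proof. by rewrite /mideal /max_ideal inE. Qed.

Lemma resq_ge2 : (2 <= resq R)%N.
Proof.
set m := max_ideal R.
have m0 : (0 < #|m|)%N by apply/card_gt0P; exists 0; rewrite in_mideal unitr0.
set T := [set 1 + x | x in m].
have cT : #|T| = #|m| by apply: card_imset; apply: addrI.
have dis : m :&: T = set0.
  apply/setP => y; rewrite !inE; apply/negP => /andP [hy /imsetP [x hx ex]].
  rewrite in_mideal in hx; rewrite ex in hy.
  by have := Rloc hy (RnuN hx); rewrite addrK unitr1.
have : (#|m :|: T| <= #|R|)%N by apply: max_card.
rewrite cardsU dis cards0 subn0 cT addnn -muln2 mulnC => h.
rewrite /resq -/m; apply: leq_trans (leq_div2r _ h); rewrite mulnK //.
Qed.

End RingR.

Section RingS.
Variables (R S : finComUnitRingType) (iota : {rmorphism R -> S}) (sigma : {rmorphism S -> S}).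
Hypothesis HR : chain_ring R.
Hypothesis Hiota : injective iota.
Hypothesis Hsigma_bij : bijective sigma.
Hypothesis Hsigma_fix : forall s : S, sigma s = s <-> exists r : R, s = iota r.
Hypothesis Hsigma_frob : forall y : S, ext_ideal iota (sigma y - y ^+ resq R).
Variable z : R.
Hypothesis Hz0 : z != 0.
Hypothesis Hzm : forall x : R, x \isn't a GRing.unit -> z * x = 0.

Local Notation q := (resq R).
Definition J (x : S) := iota z * x == 0.

Lemma JD x y : J x -> J y -> J (x + y).
Proof. by rewrite /J mulrDr => /eqP -> /eqP ->; rewrite addr0. Qed.
Lemma JN x : J x -> J (- x).
Proof. by rewrite /J mulrN => /eqP ->; rewrite oppr0. Qed.
Lemma JB x y : J x -> J y -> J (x - y).
Proof. by move=> hx hy; apply: JD => //; apply: JN. Qed.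
Lemma JMl x y : J x -> J (y * x).
Proof. by rewrite /J mulrCA => /eqP ->; rewrite mulr0. Qed.
Lemma JMr x y : J x -> J (x * y).
Proof. by rewrite mulrC; apply: JMl. Qed.
Lemma J0 : J 0.
Proof. by rewrite /J mulr0. Qed.

Lemma J_ext s : ext_ideal iota s -> J s.
Proof.
move=> [k [r [t [hr ->]]]]; rewrite /J mulr_sumr big1 // => i _.
by rewrite mulrA -rmorphM Hzm ?rmorph0 ?mul0r // -in_mideal hr.
Qed.

Lemma J_nu x : J x -> x \isn't a GRing.unit.
Proof.
move=> /eqP h; apply/negP => xu; move: Hz0; rewrite -(inj_eq Hiota) rmorph0.
by rewrite -[iota z](mulrK xu) h mul0r eqxx.
Qed.

Lemma sigma_iota r : sigma (iota r) = iota r.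
Proof. by apply/Hsigma_fix; exists r. Qed.

Lemma J_sigma x : J x -> J (sigma x).
Proof. by rewrite /J => /eqP h; rewrite -(sigma_iota z) -rmorphM h rmorph0. Qed.

Lemma sigma_order : exists2 M, (0 < M)%N & forall k s, iter (M * k) sigma s = s.
Proof.
have inj : injective sigma by apply: bij_inj.
pose p := perm inj.
exists #[p]%g; first exact: order_gt0.
move=> k s; rewrite -(eq_iter (permE inj)) -permX expgM expg_order expg1n perm1 //.
Qed.

Lemma iter_sigma_iota k r : iter k sigma (iota r) = iota r.
Proof. by elim: k => //= k ->; rewrite sigma_iota. Qed.

Lemma J_frob y : J (sigma y - y ^+ q).
Proof. exact: J_ext. Qed.

Lemma J_iter_frob y j : J (iter j sigma y - y ^+ (q ^ j)).
Proof.
elim: j => [|j IH] /=; first by rewrite expn0 expr1 subrr J0.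
set Y := iter j sigma y.
have -> : sigma Y - y ^+ (q ^ j.+1) =
   (sigma Y - Y ^+ q) + (Y ^+ q - (y ^+ (q ^ j)) ^+ q).
  by rewrite -exprM -expnSr; ring.
apply: JD; first exact: J_frob.
by rewrite subrXX; apply: JMr.
Qed.

Lemma J_prod n (a b : nat -> S) : (forall i, J (a i - b i)) ->
  J (\prod_(i < n) a i - \prod_(i < n) b i).
Proof.
move=> h; elim: n => [|n IH]; first by rewrite !big_ord0 subrr J0.
rewrite !big_ord_recr /=.
set A := \prod_(i < n) a i; set B := \prod_(i < n) b i.
have -> : A * a n - B * b n = (A - B) * a n + B * (a n - b n) by ring.
by apply: JD; [apply: JMr | apply: JMl].
Qed.

Lemma nu_J y : y \isn't a GRing.unit -> J y.
Proof.
move=> yn; have [M0 M00 HM] := sigma_order.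
case: M0 M00 HM => // M _ HM.
pose N := \prod_(j < M.+1) iter j sigma y.
have sN : sigma N = N.
  rewrite /N rmorph_prod.
  rewrite big_ord_recr big_ord_recl /= -iterS.
  have -> : iter M.+1 sigma y = y by have := HM 1%N y; rewrite muln1.
  by rewrite mulrC; congr (_ * _); apply: eq_bigr => i _.
have [r hr] := (Hsigma_fix N).1 sN.
have JN : J N.
  have rn : r \isn't a GRing.unit.
    apply: contra yn => ru; move: (rmorph_unit iota ru); rewrite -hr /N.
    by rewrite big_ord_recl /= unitrM => /andP [].
  by rewrite /J hr -rmorphM Hzm // rmorph0.
set E := (\sum_(j < M.+1) q ^ j)%N.
have JE : J (y ^+ E).
  have := J_prod M.+1 (a := fun j => iter j sigma y) (b := fun j => y ^+ (q ^ j)) (J_iter_frob y).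
  rewrite -/N prodrXr => h.
  have -> : y ^+ E = N - (N - y ^+ E) by ring.
  exact: JB.
set K := (M.+1 * E)%N.
have hK : iter K sigma y = y by apply: HM.
have EK : (E <= q ^ K)%N.
  apply: leq_trans (ltnW (ltn_expl K (resq_ge2 HR))).
  by rewrite /K leq_pmull.
have := J_iter_frob y K; rewrite hK.
have -> : y ^+ (q ^ K) = y ^+ E * y ^+ (q ^ K - E) by rewrite -exprD subnKC.
move=> h; have -> : y = (y - y ^+ E * y ^+ (q ^ K - E)) + y ^+ E * y ^+ (q ^ K - E) by ring.
by apply: JD => //; apply: JMr.
Qed.

Lemma J_iff y : J y <-> y \isn't a GRing.unit.
Proof. by split; [apply: J_nu | apply: nu_J]. Qed.

Lemma Sloc (x y : S) : x \isn't a GRing.unit -> y \isn't a GRing.unit ->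
  x + y \isn't a GRing.unit.
Proof. by move=> /nu_J hx /nu_J hy; apply: J_nu; apply: JD. Qed.

Lemma roots_count (p : {poly S}) (s : seq S) : p \is monic -> uniq s ->
  (forall x y, x \in s -> y \in s -> x - y \isn't a GRing.unit -> x = y) ->
  (forall x, x \in s -> p.[x] \isn't a GRing.unit) -> (size s < size p)%N.
Proof.
elim: s p => [|x s IH] p pm us hinj hr.
  by rewrite size_poly_gt0 monic_neq0.
have hx : p.[x] \isn't a GRing.unit by apply: hr; rewrite mem_head.
have sp : (1 < size p)%N.
  rewrite ltnNge; apply/negP => hs.
  have e := size1_polyC hs.
  have : lead_coef p = p`_0.
    rewrite lead_coefE; suff -> : size p = 1%N by [].
    by apply/eqP; rewrite eqn_leq hs size_poly_gt0 monic_neq0.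
  rewrite (monicP pm) => e0; move: hx; rewrite e -e0 hornerC unitr1 //.
have hc : (size (- p.[x]%:P) < size p)%N.
  by rewrite size_polyN size_polyC (leq_ltn_trans (leq_b1 _)).
have [q eq] : exists q, p - p.[x]%:P = q * ('X - x%:P).
  apply/factor_theorem; by rewrite /root !hornerE subrr.
have pm' : p - p.[x]%:P \is monic by rewrite monicE lead_coefDl // (monicP pm).
have qm : q \is monic by rewrite -(monicMr q (monicXsubC x)) -eq.
have sq : size q = (size p).-1.
  have := size_Mmonic (monic_neq0 qm) (monicXsubC x).
  by rewrite size_XsubC -eq size_polyDl // addn2 /= => ->.
move: us; rewrite /= => /andP [xs us].
have : (size s < size q)%N.
  apply: IH => //.
    by move=> u v hu hv; apply: hinj; rewrite in_cons ?hu ?hv orbT.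
  move=> y hy.
  have hyx : y - x \is a GRing.unit.
    apply/negPn/negP => h; have := hinj y x _ (mem_head x s) h; rewrite in_cons hy orbT => /(_ erefl).
    by move=> e; rewrite -e hy in xs.
  have : (p - p.[x]%:P).[y] \isn't a GRing.unit.
    rewrite !hornerE; apply: Sloc; first by apply: hr; rewrite in_cons hy orbT.
    by rewrite unitrN.
  by rewrite eq hornerM !hornerE unitrM hyx andbT.
by rewrite sq /= => h; rewrite -(ltn_predK sp) ltnS.
Qed.

Definition cls (r : R) : {set R} := [set y : R | y - r \isn't a GRing.unit].
Definition rep (K : {set R}) : R := odflt 0 [pick y in K].

Lemma cls_self r : r \in cls r.
Proof. by rewrite inE subrr unitr0. Qed.

Lemma cls_eq y r : y \in cls r -> cls y = cls r.
Proof.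
rewrite inE => h; apply/setP => w; rewrite !inE; apply/idP/idP => hw.
  by have := Rloc HR hw h; rewrite addrA subrK.
have := Rloc HR hw (RnuN h); rewrite opprB addrA subrK //.
Qed.

Lemma rep_cls r : rep (cls r) \in cls r.
Proof. by rewrite /rep; case: pickP => [y -> //|/(_ r)]; rewrite cls_self. Qed.

Lemma HF_lemma rho : sigma rho - rho \isn't a GRing.unit ->
  exists r, rho - iota r \isn't a GRing.unit.
Proof.
move=> h; case: (pickP (fun r => rho - iota r \isn't a GRing.unit)) => [r hr | none].
  by exists r.
exfalso.
set C := [set cls r | r : R].
set m := max_ideal R.
have m0 : (0 < #|m|)%N by apply/card_gt0P; exists 0; rewrite in_mideal unitr0.
have hcard : (#|R| <= #|C| * #|m|)%N.
  pose g := fun r => (cls r, r - rep (cls r)).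
  have ginj : injective g.
    move=> r r' [e1 e2]; move: e2; rewrite e1; exact: subIr.
  rewrite -cardsX -cardsT -(card_imset setT ginj); apply: subset_leq_card.
  apply/subsetP => u /imsetP [r _ ->]; rewrite inE /=; apply/andP; split.
    by apply/imsetP; exists r.
  rewrite in_mideal -opprB unitrN; have := rep_cls r; rewrite inE //.
have hq : (q <= #|C|)%N.
  rewrite /resq -/m; apply: leq_trans (leq_div2r _ hcard) _; rewrite mulnK //.
have q2 := resq_ge2 HR.
set reps := [seq rep K | K <- enum C].
have ureps : uniq reps.
  rewrite map_inj_in_uniq ?enum_uniq // => K K'; rewrite !mem_enum => hK hK' e.
  move: hK hK' e => /imsetP [r _ ->] /imsetP [r' _ ->] e.
  by rewrite -(cls_eq (rep_cls r)) -(cls_eq (rep_cls r')) e.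
have repinj : forall c c', c \in reps -> c' \in reps -> c - c' \isn't a GRing.unit -> c = c'.
  move=> c c' /mapP [K hK ->] /mapP [K' hK' ->] hcc.
  move: hK hK' hcc; rewrite !mem_enum => /imsetP [r _ ->] /imsetP [r' _ ->] hcc.
  suff -> : cls r = cls r' by [].
  rewrite -(cls_eq (rep_cls r)) -(cls_eq (rep_cls r')); apply: cls_eq.
  by rewrite inE.
set p : {poly S} := 'X^q - 'X.
have sX : (size (- 'X : {poly S}) < size ('X^q : {poly S}))%N.
  by rewrite size_polyN size_polyX size_polyXn ltnS.
have pm : p \is monic by rewrite monicE lead_coefDl // lead_coefXn.
have ps : size p = q.+1 by rewrite size_polyDl // size_polyXn.
have := roots_count (s := rho :: map iota reps) pm.
rewrite /= size_map ps ltnS /reps size_map -cardE => H.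
have : (#|C| < q)%N; last by rewrite ltnNge hq.
apply: H.
- rewrite /= map_inj_uniq // ureps andbT; apply/mapP => [[c _ e]].
  by have := none c; rewrite e subrr unitr0.
- move=> x y; rewrite !in_cons => /orP [/eqP -> | /mapP [c hc ->]] /orP [/eqP -> | /mapP [c' hc' ->]] //.
  + by have := none c'; rewrite /= => /negbFE ->.
  + by have := none c; rewrite /= -unitrN opprB => /negbFE ->.
  + rewrite -rmorphB => hn; congr (iota _); apply: repinj => //.
    by apply: contra hn; apply: rmorph_unit.
- have Jroot : forall x, J (sigma x - x) -> p.[x] \isn't a GRing.unit.
    move=> x hJ; apply: J_nu; rewrite /p !hornerE.
    have -> : x ^+ q - x = (sigma x - x) - (sigma x - x ^+ q) by ring.
    by apply: JB => //; apply: J_frob.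
  move=> x; rewrite in_cons => /orP [/eqP -> | /mapP [c _ ->]].
    by apply: Jroot; apply: nu_J.
  by apply: Jroot; rewrite sigma_iota subrr J0.
Qed.

End RingS.

Lemma flatten_nil (T : eqType) (s : seq (seq T)) : (forall x, x \in s -> x = [::]) -> flatten s = [::].
Proof. by elim: s => //= x s IH h; rewrite (h x (mem_head _ _)) IH // => y hy; apply: h; rewrite in_cons hy orbT. Qed.

Lemma flatten_if (I : eqType) (T : eqType) (B : I -> seq T) (P : pred I) (s : seq I) :
  (forall i j, P i -> P j -> i = j) -> uniq s ->
  flatten [seq (if P i then B i else [::]) | i <- s] = [::] \/
  exists i0, flatten [seq (if P i then B i else [::]) | i <- s] = B i0.
Proof.
move=> hP; elim: s => [|i s IH] /=; first by left.
move=> /andP [ni us]; case: ifP => Pi; last exact: IH.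
right; exists i; rewrite flatten_nil ?cats0 // => x /mapP [j hj ->].
case: ifP => // Pj; have e := hP _ _ Pi Pj; by rewrite e hj in ni.
Qed.

Theorem theorem4
  (R S : finComUnitRingType) (iota : {rmorphism R -> S})
  (h : {poly R}) (theta : S) (sigma : {rmorphism S -> S})
  (HR : chain_ring R)
  (Hiota : injective iota)
  (Hh_monic : h \is monic)
  (Hh_irr : irreducible_mod_m h)
  (HS : is_quotient_by iota h theta)
  (Hsigma_bij : bijective sigma)
  (Hsigma_fix : forall s : S, sigma s = s <-> exists r : R, s = iota r)
  (Hsigma_gen : forall tau : {rmorphism S -> S}, bijective tau ->
       (forall r : R, tau (iota r) = iota r) ->
       exists k : nat, forall s : S, tau s = iter k sigma s)
  (Hsigma_frob : forall y : S, ext_ideal iota (sigma y - y ^+ resq R))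
  (l : nat) (ns : 'I_l -> nat)
  (a : 'I_l -> S) (beta : forall i : 'I_l, 'I_(ns i) -> S)
  (c : forall i : 'I_l, 'I_(ns i) -> S)
  (Ha_unit : forall i, a i \is a GRing.unit)
  (Hi : forall (b : S), b \is a GRing.unit -> forall i j : 'I_l, (i < j)%N ->
          (a i - sconj sigma (a j) b) \is a GRing.unit)
  (Hii : forall i : 'I_l, forall r : 'I_(ns i) -> R,
          \sum_(j < ns i) iota (r j) * beta i j = 0 -> forall j, r j = 0) :
  exists! F : {poly S},
    (size F <= \sum_(i < l) ns i)%N /\
    forall (i : 'I_l) (j : 'I_(ns i)), skew_eval sigma F (a i) (beta i j) = c i j.
Proof.
have [z Hz0 Hzm] := Rsocle HR.
have Hloc := Sloc HR Hiota Hsigma_bij Hsigma_fix Hsigma_frob Hz0 Hzm.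
have Hsig_nu : forall x : S, x \isn't a GRing.unit -> sigma x \isn't a GRing.unit.
  move=> x hx; apply: (J_nu Hiota Hz0); apply: (J_sigma Hsigma_fix).
  exact: (nu_J HR Hsigma_bij Hsigma_fix Hsigma_frob Hzm hx).
have Hfix : forall r, sigma (iota r) = iota r by apply: sigma_iota.
have HF := HF_lemma HR Hiota Hsigma_bij Hsigma_fix Hsigma_frob Hz0 Hzm.
have Hz : forall x : S, x \isn't a GRing.unit -> iota z * x = 0.
  by move=> x hx; apply/eqP; apply: (nu_J HR Hsigma_bij Hsigma_fix Hsigma_frob Hzm hx).
pose A := fun x => exists i, x = a i.
have HAu : forall x, A x -> x \is a GRing.unit by move=> x [i ->].
have sconj1 : forall y, sconj sigma y 1 = y.
  by move=> y; rewrite /sconj rmorph1 invr1 mul1r mulr1.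
have ainj : forall i j, a i = a j -> i = j.
  move=> i j e; apply/eqP/negP => /negP; rewrite neq_ltn => /orP [] hij.
    by have := Hi 1 (unitr1 S) i j hij; rewrite sconj1 e subrr unitr0.
  by have := Hi 1 (unitr1 S) j i hij; rewrite sconj1 e subrr unitr0.
have HAc : forall x y, A x -> A y -> x <> y -> forall d, d \is a GRing.unit ->
    sconj sigma x d - y \is a GRing.unit.
  move=> x y [i ->] [j ->] ne d du.
  have nij : i != j by apply/eqP => e; apply: ne; rewrite e.
  move: nij; rewrite neq_ltn => /orP [] hij.
    have dVu : d^-1 \is a GRing.unit by rewrite unitrV.
    have := Hi d^-1 dVu i j hij.
    have sdu : sigma d \is a GRing.unit by rewrite rmorph_unit.
    have e1 : sigma d * sigma d^-1 = 1 by rewrite -rmorphM mulrV // rmorph1.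
    have e2 : d * d^-1 = 1 by rewrite mulrV.
    have -> : sconj sigma (a i) d - a j = sigma d * (a i - sconj sigma (a j) d^-1) * d^-1.
      rewrite /sconj invrK; ring: e1 e2.
    by move=> hu; rewrite !unitrM sdu hu dVu.
  have := Hi d du j i hij.
  by rewrite -unitrN opprB.
pose blk := fun i : 'I_l => [seq (a i, beta i j, c i j) | j <- enum 'I_(ns i)].
pose ptsc := flatten [seq blk i | i <- enum 'I_l].
pose pts := [seq t.1 | t <- ptsc].
pose cs := fun k => (nth (0,0,0) ptsc k).2.
have memc : forall t, t \in ptsc <-> exists i j, t = (a i, beta i j, c i j).
  move=> t; split.
    by move/flattenP => [s /mapP [i _ ->] /mapP [j _ ->]]; exists i, j.
  move=> [i [j ->]]; apply/flattenP; exists (blk i).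
    by apply/mapP; exists i; rewrite ?mem_enum.
  by apply/mapP; exists j; rewrite ?mem_enum.
have hA : forall p, p \in pts -> A p.1.
  by move=> p /mapP [t /memc [i [j ->]] ->]; exists i.
have sz : size pts = \sum_(i < l) ns i.
  rewrite size_map size_flatten /shape -map_comp sumnE big_map big_enum /=.
  by apply: eq_bigr => i _; rewrite size_map size_enum_ord.
have hg : good iota pts.
  move=> x.
  have blkE : forall i, [seq p.2 | p <- [seq t.1 | t <- blk i] & p.1 == x] =
      if a i == x then [seq beta i j | j <- enum 'I_(ns i)] else [::].
    move=> i; rewrite /blk -map_comp filter_map -map_comp.
    case: (eqVneq (a i) x) => [e | ne].
      rewrite (@eq_filter _ _ predT); last by move=> j; rewrite /= e eqxx.
      by rewrite filter_predT; apply: eq_map.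
    rewrite (@eq_filter _ _ pred0); last by move=> j; rewrite /= (negbTE ne).
    by rewrite filter_pred0.
  have -> : classL pts x = flatten [seq (if a i == x then
        [seq beta i j | j <- enum 'I_(ns i)] else [::]) | i <- enum 'I_l].
    rewrite /classL /pts /ptsc map_flatten filter_flatten map_flatten -!map_comp.
    by congr flatten; apply: eq_map => i /=; rewrite blkE.
  have hP : forall i j : 'I_l, a i == x -> a j == x -> i = j.
    by move=> i j /eqP ei /eqP ej; apply: ainj; rewrite ei ej.
  case: (flatten_if (fun i => [seq beta i j | j <- enum 'I_(ns i)]) hP (enum_uniq 'I_l)) => [-> | [i0 ->]].
    by move=> r _ t.
  move=> r hr t ht.
  have sL : size [seq beta i0 j | j <- enum 'I_(ns i0)] = ns i0 by rewrite size_map size_enum_ord.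
  rewrite sL in ht.
  have := Hii i0 (fun j => r j) _ (Ordinal ht); apply.
  move: hr; rewrite -(big_mkord xpredT (fun t => iota (r t) * _`_t)) sL big_mkord => hr.
  apply: (etrans _ hr); apply: eq_bigr => j _; congr (_ * _).
  by rewrite (nth_map j) ?size_enum_ord // nth_ord_enum.
have link : forall F, interp sigma pts F cs <->
    forall (i : 'I_l) (j : 'I_(ns i)), skew_eval sigma F (a i) (beta i j) = c i j.
  have szc : size pts = size ptsc by rewrite size_map.
  have nthp : forall k, (k < size ptsc)%N -> nth (0,0) pts k = (nth (0,0,0) ptsc k).1.
    by move=> k hk; rewrite (nth_map (0,0,0)).
  move=> F; split.
    move=> hF i j.
    have ht : (a i, beta i j, c i j) \in ptsc by apply/memc; exists i, j.
    have hk : (index (a i, beta i j, c i j) ptsc < size pts)%N by rewrite szc index_mem.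
    have hk' : (index (a i, beta i j, c i j) ptsc < size ptsc)%N by rewrite -szc.
    by have := hF _ hk; rewrite nthp // /cs nth_index.
  move=> hF k hk; have hk' : (k < size ptsc)%N by rewrite -szc.
  rewrite nthp // /cs.
  by have := mem_nth (0,0,0) hk'; move=> /memc [i [j ->]] /=.
have [P [_ _ _ _ Pint]] := main Hloc Hsig_nu Hfix HF Hz0 Hz HAu HAc hA hg.
have [F [[hFs hFi] hFu]] := Pint cs.
exists F; split; first by split; [rewrite -sz | apply/link].
by move=> G [hGs hGi]; apply: hFu; split; [rewrite sz | apply/link].
Qed.
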